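(* For every $n\in\mathbb N$, the set $\{\mathrm{First}(n),\ \mathrm{Next}(\mathrm{First}(n)),\ \mathrm{Next}(\mathrm{Next}(\mathrm{First}(n))),\ldots\}$ of naturally labeled topologies obtained by iteratively applying $\mathrm{Next}$ to $\mathrm{First}(n)$ (until $\mathrm{Next}$ is undefined) is exactly the set of all naturally labeled topologies of size $n$.
   Context: Let $X_n=\{0,1,\ldots,n-1\}$. A naturally labeled (NL) poset on $X_n$ is a partial order $\preceq$ on $X_n$ with $x\preceq y\Rightarrow x\le y$. A topology of size $n$ is a set $T$ of subsets of $X_n$ containing $\emptyset$ and $X_n$ and closed under union and intersection; it is a naturally labeled topology (NLT) if it equals the set of order ideals (downward closed subsets) of some NL poset on $X_n$. Subsets of $X_n$ are identified with the increasing words of their elements, and the length-lexicographic order compares words first by length, then lexicographically. Definitions: for an NLT $T$ of size $n$ and $S\in T$, $\mathrm{Grow}_S(T)=T\cup\{U\cup\{n\}: U\in T,\ S\subseteq U\}$ (an NLT of size $n+1$). $\mathrm{First}(n)=\mathrm{Grow}_\emptyset^n(\{\emptyset\})$ ($n$-fold application starting from the size-$0$ topology $\{\emptyset\}$). For $T$ of size $n\ge1$, $\mathrm{Cut}(T)=\{U\in T: n-1\notin U\}$ (size $n-1$). For $S\in T$, $\mathrm{Next}_S(T)$ is the element of $T$ immediately following $S$ in the length-lexicographic order, undefined if $S$ is the last element of $T$. $\mathrm{Next}(\{\emptyset\})$ is undefined; for an NLT $T$ of size $n\ge1$, $\mathrm{Next}(T)$ is defined recursively: let $S$ be the smallest (for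 inclusion) set of $T$ containing $n-1$, $S'=S\setminus\{n-1\}$, $T'=\mathrm{Cut}(T)$; if $\mathrm{Next}_{S'}(T')$ is defined, $\mathrm{Next}(T)=\mathrm{Grow}_{S''}(T')$ with $S''=\mathrm{Next}_{S'}(T')$; otherwise, if $\mathrm{Next}(T')$ is defined, $\mathrm{Next}(T)=\mathrm{Grow}_\emptyset(\mathrm{Next}(T'))$; otherwise $\mathrm{Next}(T)$ is undefined. *)

(* Defs.v *)
(* Subsets of X_n = {0,...,n-1} are {set 'I_n};
   topologies of size n are {set {set 'I_n}}. *)
From mathcomp Require Import all_boot.
Set Implicit Arguments. Unset Strict Implicit. Unset Printing Implicit Defensive.

Definition is_poset n (R : rel 'I_n) : Prop :=
  [/\ reflexive R, antisymmetric R & transitive R].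

Definition is_NL_poset n (R : rel 'I_n) : Prop :=
  is_poset R /\ (forall x y : 'I_n, R x y -> x <= y).

Definition order_ideals n (R : rel 'I_n) : {set {set 'I_n}} :=
  [set A : {set 'I_n} | [forall x, forall y, R x y ==> (y \in A) ==> (x \in A)]].

Definition is_topology n (T : {set {set 'I_n}}) : Prop :=
  [/\ set0 \in T, [set: 'I_n] \in T,
      (forall U V, U \in T -> V \in T -> U :|: V \in T) &
      (forall U V, U \in T -> V \in T -> U :&: V \in T)].

Definition is_NLT n (T : {set {set 'I_n}}) : Prop :=
  is_topology T /\ exists R : rel 'I_n, is_NL_poset R /\ T = order_ideals R.

(* word of a subset = increasing list of its elements *)
Definition word n (A : {set 'I_n}) : seq nat := map val (enum A).

Fixpoint lex_lt (s t : seq nat) : bool :=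
  match s, t with
  | [::], [::] => false
  | [::], _ :: _ => true
  | _ :: _, [::] => false
  | x :: s', y :: t' => (x < y) || ((x == y) && lex_lt s' t')
  end.

Definition ll_lt n (A B : {set 'I_n}) : bool :=
  (size (word A) < size (word B)) ||
  ((size (word A) == size (word B)) && lex_lt (word A) (word B)).

Definition ll_le n (A B : {set 'I_n}) : bool := (A == B) || ll_lt A B.

Definition up n (U : {set 'I_n}) : {set 'I_n.+1} :=
  [set widen_ord (leqnSn n) x | x in U].

Definition down n (U : {set 'I_n.+1}) : {set 'I_n} :=
  [set x : 'I_n | widen_ord (leqnSn n) x \in U].

Definition Grow n (S : {set 'I_n}) (T : {set {set 'I_n}}) : {set {set 'I_n.+1}} :=
  [set up U | U in T] :|: [set (ord_max |: up U) | U in T & S \subset U].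

Fixpoint First (n : nat) : {set {set 'I_n}} :=
  match n with
  | 0 => [set set0]
  | m.+1 => Grow set0 (First m)
  end.

Definition Cut n (T : {set {set 'I_n.+1}}) : {set {set 'I_n}} :=
  [set down U | U in T & ord_max \notin U].

Definition NextS n (S : {set 'I_n}) (T : {set {set 'I_n}}) : option {set 'I_n} :=
  [pick U in T | ll_lt S U && [forall V in T, ll_lt S V ==> ll_le U V]].

(* smallest (for inclusion) set of T containing n-1 (T closed under ∩) *)
Definition smallest_with_max n (T : {set {set 'I_n.+1}}) : {set 'I_n.+1} :=
  \bigcap_(U in T | ord_max \in U) U.

Fixpoint Next (n : nat) : {set {set 'I_n}} -> option {set {set 'I_n}} :=
  match n return {set {set 'I_n}} -> option {set {set 'I_n}} with
  | 0 => fun _ => None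
  | m.+1 => fun T =>
      let S := smallest_with_max T in
      let S' := down S in
      let T' := Cut T in
      match NextS S' T' with
      | Some S'' => Some (Grow S'' T')
      | None => omap (Grow set0) (Next T')
      end
  end.

Fixpoint iterNext n (k : nat) (T : {set {set 'I_n}}) : option {set {set 'I_n}} :=
  match k with
  | 0 => Some T
  | k'.+1 => obind (@Next n) (iterNext k' T)
  end.

(* Main.v *)
Require Import Defs.
From mathcomp Require Import all_boot.
Set Implicit Arguments. Unset Strict Implicit. Unset Printing Implicit Defensive.

Notation wd n := (widen_ord (leqnSn n)).

Lemma wd_inj n : injective (wd n).
Proof. by move=> x y /(congr1 val) /= /val_inj. Qed.

Lemma wd_neq_max n (x : 'I_n) : (wd n x == ord_max) = false.
Proof. by apply/negbTE; rewrite -val_eqE /= neq_ltn ltn_ord. Qed.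

Lemma ordS_cases n (x : 'I_n.+1) : x = ord_max \/ exists x' : 'I_n, x = wd n x'.
Proof.
case: (ltnP x n) => h.
  by right; exists (Ordinal h); apply/val_inj.
by left; apply/val_inj => /=; apply/eqP; rewrite eqn_leq h -ltnS ltn_ord.
Qed.

Lemma mem_up n (U : {set 'I_n}) x : (wd n x \in up U) = (x \in U).
Proof. by rewrite /up mem_imset //; apply: wd_inj. Qed.

Lemma max_notin_up n (U : {set 'I_n}) : (ord_max \in up U) = false.
Proof. by apply/negbTE/imsetP => -[y _ /eqP]; rewrite eq_sym wd_neq_max. Qed.

Lemma mem_down n (U : {set 'I_n.+1}) x : (x \in down U) = (wd n x \in U).
Proof. by rewrite inE. Qed.

Lemma down_up n (U : {set 'I_n}) : down (up U) = U.
Proof. by apply/setP => x; rewrite mem_down mem_up. Qed.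

Lemma down_U1up n (U : {set 'I_n}) : down (ord_max |: up U) = U.
Proof. by apply/setP => x; rewrite mem_down !inE wd_neq_max mem_up. Qed.

Lemma up_down n (V : {set 'I_n.+1}) : ord_max \notin V -> up (down V) = V.
Proof.
move=> hV; apply/setP => x; case: (ordS_cases x) => [->|[x' ->]].
  by rewrite max_notin_up (negbTE hV).
by rewrite mem_up mem_down.
Qed.

Lemma U1up_down n (V : {set 'I_n.+1}) : ord_max \in V -> ord_max |: up (down V) = V.
Proof.
move=> hV; apply/setP => x; case: (ordS_cases x) => [->|[x' ->]].
  by rewrite setU11 hV.
by rewrite !inE wd_neq_max mem_up mem_down.
Qed.

Lemma mem_Grow n (S : {set 'I_n}) T V :
  (V \in Grow S T) = (down V \in T) && ((ord_max \in V) ==> (S \subset down V)).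
Proof.
rewrite /Grow inE; apply/orP/andP.
  case=> /imsetP [U].
    by move=> hU ->; rewrite down_up max_notin_up.
  by rewrite inE => /andP [hU hS] ->; rewrite down_U1up hU hS setU11.
case=> hT; case hm: (ord_max \in V) => /= hS.
  by right; apply/imsetP; exists (down V); rewrite ?inE ?hT ?hS // U1up_down.
by left; apply/imsetP; exists (down V); rewrite // up_down // hm.
Qed.

Lemma mem_Cut n (T : {set {set 'I_n.+1}}) W : (W \in Cut T) = (up W \in T).
Proof.
apply/imsetP/idP.
  by case=> U; rewrite inE => /andP [hU hm] ->; rewrite up_down.
by move=> h; exists (up W); rewrite ?inE ?h ?max_notin_up ?down_up.
Qed.

Definition good n (T : {set {set 'I_n}}) :=
  is_topology T /\ forall x : 'I_n, [set z : 'I_n | z < x] \in T.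

Lemma top_bigcap n (T : {set {set 'I_n}}) (I : finType) (P : pred I) F :
  is_topology T -> (forall i, P i -> F i \in T) -> \bigcap_(i | P i) F i \in T.
Proof.
case=> _ hT _ hI hF; apply big_ind => //.
Qed.

Lemma top_bigcup n (T : {set {set 'I_n}}) (I : finType) (P : pred I) F :
  is_topology T -> (forall i, P i -> F i \in T) -> \bigcup_(i | P i) F i \in T.
Proof.
case=> h0 _ hU _ hF; apply big_ind => //.
Qed.

Lemma NLT_good n (T : {set {set 'I_n}}) : is_NLT T -> good T.
Proof.
case=> hT [R [[_ hNL] hTR]]; split => // x; rewrite hTR.
rewrite inE; apply/forallP => a; apply/forallP => b; apply/implyP => hab.
rewrite !inE; apply/implyP => hb; exact: leq_ltn_trans (hNL _ _ hab) hb.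
Qed.

Lemma good_NLT n (T : {set {set 'I_n}}) : good T -> is_NLT T.
Proof.
case=> hT hI; split => //.
pose R := [rel x y : 'I_n | [forall V in T, (y \in V) ==> (x \in V)]].
have hNL : forall x y, R x y -> x <= y.
  move=> x y /forall_inP /(_ _ (hI x)); rewrite !inE ltnn.
  by case: ltngtP => // _ /(_ isT).
exists R; split.
  split=> //; split.
  - by move=> x; apply/forall_inP => V _; apply/implyP.
  - move=> x y /andP [/hNL h1 /hNL h2]; apply/val_inj; apply/eqP.
    by rewrite eqn_leq h1 h2.
  - move=> y x z /forall_inP h1 /forall_inP h2; apply/forall_inP => V hV.
    by apply/implyP => hz; move/implyP: (h1 V hV); apply; move/implyP: (h2 V hV); apply.
apply/setP => A; apply/idP/idP.
  move=> hA; rewrite inE; apply/forallP => x; apply/forallP => y.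
  by apply/implyP => /forall_inP /(_ _ hA).
rewrite inE => /forallP hA.
have -> : A = \bigcup_(y in A) \bigcap_(V in T | y \in V) V.
  apply/setP => x; apply/idP/bigcupP.
    by move=> hx; exists x => //; apply/bigcapP => V /andP [].
  case=> y hy /bigcapP hxy.
  have hR : R x y.
    by apply/forall_inP => V hV; apply/implyP => hyV; apply: hxy; rewrite hV.
  by move/forallP: (hA x) => /(_ y) /implyP /(_ hR) /implyP /(_ hy).
apply: top_bigcup => // y _; apply: top_bigcap => // V /andP [] -> //.
Qed.

Lemma downU n (U V : {set 'I_n.+1}) : down (U :|: V) = down U :|: down V.
Proof. by apply/setP => x; rewrite !inE. Qed.
Lemma downI n (U V : {set 'I_n.+1}) : down (U :&: V) = down U :&: down V.
Proof. by apply/setP => x; rewrite !inE. Qed.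
Lemma upU n (U V : {set 'I_n}) : up (U :|: V) = up U :|: up V.
Proof. exact: imsetU. Qed.
Lemma upI n (U V : {set 'I_n}) : up (U :&: V) = up U :&: up V.
Proof. by apply: imsetI => x y _ _; apply: wd_inj. Qed.

Lemma up_setT n : up [set: 'I_n] = [set z : 'I_n.+1 | z < @ord_max n].
Proof.
apply/setP => x; case: (ordS_cases x) => [->|[x' ->]].
  by rewrite max_notin_up inE ltnn.
by rewrite mem_up !inE /= ltn_ord.
Qed.

Lemma up_seg n (y : 'I_n) : up [set z : 'I_n | z < y] = [set z : 'I_n.+1 | z < wd n y].
Proof.
apply/setP => x; case: (ordS_cases x) => [->|[x' ->]].
  by rewrite max_notin_up inE /= ltnNge ltnW.
by rewrite mem_up !inE.
Qed.

Lemma good_Grow n (T : {set {set 'I_n}}) S : good T -> S \in T -> good (Grow S T).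
Proof.
case=> [[h0 hT hU hI] hs] hS; split; first split.
- rewrite mem_Grow inE andbT (_ : down set0 = set0) //.
  by apply/setP => x; rewrite !inE.
- rewrite mem_Grow (_ : down setT = setT) ?hT ?subsetT //.
  by rewrite implybT. by apply/setP => x; rewrite !inE.
- move=> U V; rewrite !mem_Grow downU => /andP [hu1 hu2] /andP [hv1 hv2].
  rewrite hU //= inE; apply/implyP => /orP [hm|hm].
    by apply: subset_trans (implyP hu2 hm) (subsetUl _ _).
  by apply: subset_trans (implyP hv2 hm) (subsetUr _ _).
- move=> U V; rewrite !mem_Grow downI => /andP [hu1 hu2] /andP [hv1 hv2].
  rewrite hI //= inE; apply/implyP => /andP [hm1 hm2].
  by rewrite subsetI (implyP hu2 hm1) (implyP hv2 hm2).
- move=> x; rewrite mem_Grow inE /= ltnNge -ltnS ltn_ord andbT.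
  case: (ltnP x n) => hx.
    rewrite (_ : down _ = [set z : 'I_n | z < Ordinal hx]) ?hs //.
    by apply/setP => z; rewrite !inE.
  rewrite (_ : down _ = setT) ?hT //; apply/setP => z; rewrite !inE /=.
  exact: leq_trans (ltn_ord z) hx.
Qed.

Lemma good_Cut n (T : {set {set 'I_n.+1}}) : good T -> good (Cut T).
Proof.
case=> [[h0 hT hU hI] hs]; split; first split.
- by rewrite mem_Cut (_ : up set0 = set0) // /up imset0.
- by rewrite mem_Cut up_setT.
- by move=> U V; rewrite !mem_Cut upU; apply: hU.
- by move=> U V; rewrite !mem_Cut upI; apply: hI.
- by move=> x; rewrite mem_Cut up_seg.
Qed.

Lemma Cut_Grow n (T : {set {set 'I_n}}) S : Cut (Grow S T) = T.
Proof. by apply/setP => W; rewrite mem_Cut mem_Grow down_up max_notin_up andbT. Qed.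

Lemma swm_Grow n (T : {set {set 'I_n}}) S : S \in T ->
  down (smallest_with_max (Grow S T)) = S.
Proof.
move=> hS; apply/setP => x; rewrite mem_down; apply/bigcapP/idP.
  move=> /(_ (ord_max |: up S)); rewrite mem_Grow down_U1up hS setU11 subxx.
  by rewrite !inE wd_neq_max mem_up => /(_ isT).
move=> hx V /andP []; rewrite mem_Grow => /andP [_ /implyP h] /h /subsetP /(_ _ hx).
by rewrite mem_down.
Qed.

Lemma swm_in n (T : {set {set 'I_n.+1}}) : good T ->
  smallest_with_max T \in T /\ ord_max \in smallest_with_max T.
Proof.
move=> [hT _]; split; first by apply: top_bigcap => // V /andP [].
by apply/bigcapP => V /andP [].
Qed.

Lemma swm_Cut n (T : {set {set 'I_n.+1}}) : good T ->
  down (smallest_with_max T) \in Cut T.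
Proof.
move=> hg; have [hm hmax] := swm_in hg; case: hg => [[_ _ _ hI] hs].
rewrite mem_Cut; suff -> : up (down (smallest_with_max T)) =
   smallest_with_max T :&: [set z : 'I_n.+1 | z < @ord_max n] by apply: hI.
apply/setP => x; case: (ordS_cases x) => [->|[x' ->]].
  by rewrite max_notin_up !inE ltnn andbF.
by rewrite mem_up mem_down !inE /= ltn_ord andbT.
Qed.

Lemma Grow_Cut n (T : {set {set 'I_n.+1}}) : good T ->
  Grow (down (smallest_with_max T)) (Cut T) = T.
Proof.
move=> hg; have [hm hmax] := swm_in hg; case: hg => [[_ _ hU hI] hs].
set M := smallest_with_max T.
have hupd : forall V, V \in T -> up (down V) \in T.
  move=> V hV; suff -> : up (down V) = V :&: [set z : 'I_n.+1 | z < @ord_max n] by apply: hI.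
  apply/setP => x; case: (ordS_cases x) => [->|[x' ->]].
    by rewrite max_notin_up !inE ltnn andbF.
  by rewrite mem_up mem_down !inE /= ltn_ord andbT.
apply/setP => V; rewrite mem_Grow mem_Cut; apply/andP/idP.
  case=> h1; case hv: (ord_max \in V) => /= h2; last by rewrite -(up_down (negbT hv)).
  suff -> : V = up (down V) :|: M by apply: hU.
  apply/setP => x; rewrite inE; case: (ordS_cases x) => [->|[x' ->]].
    by rewrite hv hmax orbT.
  rewrite mem_up; apply/idP/orP; first by rewrite mem_down; left.
  case; first by rewrite mem_down.
  by rewrite -mem_down => hx; rewrite -mem_down; apply: (subsetP h2).
move=> hV; split; first exact: hupd.
apply/implyP => hv; apply/subsetP => x; rewrite !mem_down; apply/subsetP.
by apply: bigcap_inf; rewrite hV hv.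
Qed.

Lemma NextE n (T : {set {set 'I_n.+1}}) :
  Next T = match NextS (down (smallest_with_max T)) (Cut T) with
           | Some S'' => Some (Grow S'' (Cut T))
           | None => omap (Grow set0) (Next (Cut T)) end.
Proof. reflexivity. Qed.

Lemma Next_Grow n (T : {set {set 'I_n}}) S : S \in T ->
  Next (Grow S T) = match NextS S T with
                    | Some S'' => Some (Grow S'' T)
                    | None => omap (Grow set0) (Next T) end.
Proof. by move=> hS; rewrite NextE Cut_Grow swm_Grow. Qed.

Lemma lex_irr s : lex_lt s s = false.
Proof. by elim: s => //= x s ->; rewrite ltnn eqxx. Qed.

Lemma lex_trans s t u : lex_lt s t -> lex_lt t u -> lex_lt s u.
Proof.
elim: s t u => [|x s IH] [|y t] [|z u] //=.
move=> /orP [h1|/andP [/eqP -> h1]] /orP [h2|/andP [/eqP <- h2]].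
- by rewrite (ltn_trans h1 h2).
- by rewrite h1.
- by rewrite h2.
- by rewrite eqxx (IH _ _ h1 h2) orbT.
Qed.

Lemma lex_total s t : s != t -> lex_lt s t || lex_lt t s.
Proof.
elim: s t => [|x s IH] [|y t] //=.
case: (ltngtP x y) => //= <-; rewrite eqseq_cons eqxx /=; exact: IH.
Qed.

Lemma word_inj n : injective (@word n).
Proof.
move=> A B /(inj_map val_inj) h; apply/setP => x; by rewrite -mem_enum h mem_enum.
Qed.

Lemma size_word n (A : {set 'I_n}) : size (word A) = #|A|.
Proof. by rewrite size_map cardE. Qed.

Lemma ll_irr n (A : {set 'I_n}) : ll_lt A A = false.
Proof. by rewrite /ll_lt ltnn eqxx lex_irr. Qed.

Lemma ll_trans n (A B C : {set 'I_n}) : ll_lt A B -> ll_lt B C -> ll_lt A C.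
Proof.
rewrite /ll_lt => /orP [h1|/andP [/eqP e1 h1]] /orP [h2|/andP [/eqP e2 h2]].
- by rewrite (ltn_trans h1 h2).
- by rewrite -e2 h1.
- by rewrite e1 h2.
- by rewrite e1 e2 eqxx (lex_trans h1 h2) orbT.
Qed.

Lemma ll_total n (A B : {set 'I_n}) : A != B -> ll_lt A B || ll_lt B A.
Proof.
move=> hAB; rewrite /ll_lt; case: ltngtP => //= e.
rewrite ?eqxx /= lex_total //; apply: contra hAB => /eqP /word_inj ->.
by [].
Qed.

Lemma ll_set0 n (A : {set 'I_n}) : ll_lt set0 A = (A != set0).
Proof.
case: (A =P set0) => [->|/eqP hA]; first by rewrite ll_irr.
by rewrite /ll_lt !size_word cards0 card_gt0 hA.
Qed.

Lemma NextS_in n (S : {set 'I_n}) (T : {set {set 'I_n}}) U : NextS S T = Some U -> U \in T.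
Proof. by rewrite /NextS; case: pickP => // U' /andP [hU _] [<-]. Qed.

Lemma NextS_eq n (S : {set 'I_n}) (T : {set {set 'I_n}}) U : U \in T -> ll_lt S U ->
  (forall V, V \in T -> ll_lt S V -> ll_le U V) -> NextS S T = Some U.
Proof.
move=> hU hSU hall; rewrite /NextS; case: pickP => [U' | /(_ U)].
  move=> /andP [hU' /andP [hsU' /forall_inP h']].
  have e1 := implyP (h' U hU) hSU; have e2 := hall U' hU' hsU'.
  move: e1 e2; rewrite /ll_le => /orP [/eqP -> //|l1] /orP [/eqP -> //|l2].
  by move: (ll_trans l1 l2); rewrite ll_irr.
rewrite hU hSU /=; move/negbT/negP; case; apply/forall_inP => V hV.
by apply/implyP; apply: hall.
Qed.

Lemma NextS_None n (S : {set 'I_n}) (T : {set {set 'I_n}}) :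
  (forall V, V \in T -> ll_lt S V = false) -> NextS S T = None.
Proof.
move=> h; rewrite /NextS; case: pickP => // U /andP [hU /andP [hS _]].
by rewrite h in hS.
Qed.

Fixpoint iterSN n (T : {set {set 'I_n}}) k S :=
  match k with 0 => Some S | k'.+1 => obind (fun X => NextS X T) (iterSN T k' S) end.

Definition rank n (T : {set {set 'I_n}}) V := #|[set W in T | ll_lt W V]|.

Lemma rank_lt n (T : {set {set 'I_n}}) V W : V \in T -> ll_lt V W -> rank T V < rank T W.
Proof.
move=> hV hVW; apply: proper_card; apply/properP; split.
  apply/subsetP => X; rewrite !inE => /andP [-> h] /=; exact: ll_trans h hVW.
by exists V; rewrite !inE ?hV ?hVW ?ll_irr.
Qed.

Lemma rank_gt0 n (T : {set {set 'I_n}}) U : set0 \in T -> U != set0 -> 0 < rank T U.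
Proof.
by move=> h0 hU; rewrite card_gt0; apply/set0Pn; exists set0; rewrite inE h0 ll_set0.
Qed.

Lemma reach n (T : {set {set 'I_n}}) : set0 \in T ->
  forall U, U \in T -> exists j, iterSN T j set0 = Some U.
Proof.
move=> h0 U; move: {2}(rank T U) (leqnn (rank T U)) => m.
elim: m U => [|m IH] U hr hU; case: (U =P set0) => [->|/eqP hne]; try by exists 0.
  by move: (rank_gt0 h0 hne); rewrite leqn0 in hr; rewrite (eqP hr).
have hp : set0 \in [set W in T | ll_lt W U] by rewrite inE h0 ll_set0.
case: (arg_maxnP (rank T) hp) => P hPin hmax.
have : P \in [set W in T | ll_lt W U] := hPin.
rewrite inE => /andP [hP hPU].
have [j hj] : exists j, iterSN T j set0 = Some P.
  apply: IH => //; rewrite -ltnS; exact: leq_trans (rank_lt hP hPU) hr.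
exists j.+1; rewrite /= hj /=; apply: NextS_eq => // V hV hPV.
rewrite /ll_le; case: (V =P U) => [->|/eqP hVU]; first by rewrite eqxx.
rewrite eq_sym (negbTE hVU) /=; case/orP: (ll_total hVU) => // hVU'.
have hVin : V \in [set W in T | ll_lt W U] by rewrite inE hV hVU'.
have := hmax V hVin.
by move=> h; move: (leq_trans (rank_lt hP hPV) h); rewrite ltnn.
Qed.

Lemma last_ex n (T : {set {set 'I_n}}) : set0 \in T ->
  exists L, L \in T /\ NextS L T = None.
Proof.
move=> h0; case: (arg_maxnP (rank T) h0) => L hL hmax.
exists L; split => //; apply: NextS_None => V hV; apply/negP => hLV.
by move: (leq_trans (rank_lt hL hLV) (hmax V hV)); rewrite ltnn.
Qed.

Lemma iterNextS n k (T : {set {set 'I_n}}) :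
  iterNext k.+1 T = obind (@Next n) (iterNext k T).
Proof. reflexivity. Qed.

Lemma iterSS n (T : {set {set 'I_n}}) k S :
  iterSN T k.+1 S = obind (fun X => NextS X T) (iterSN T k S).
Proof. reflexivity. Qed.

Lemma iterS_Grow n (T : {set {set 'I_n}}) S j U : S \in T ->
  iterSN T j S = Some U -> U \in T /\ iterNext j (Grow S T) = Some (Grow U T).
Proof.
move=> hS; elim: j U => [|j IH] U.
  by move=> [<-]; split.
rewrite iterSS; case h: (iterSN T j S) => [U0|]; last by move=> H; discriminate H.
move=> hN; change (NextS U0 T = Some U) in hN.
have [hU0 hit] := IH U0 h; split; first exact: NextS_in hN.
by rewrite iterNextS hit; change (Next (Grow U0 T) = Some (Grow U T));
   rewrite Next_Grow // hN.
Qed.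

Lemma iterNext_add n (T T1 T2 : {set {set 'I_n}}) a b :
  iterNext b T = Some T1 -> iterNext a T1 = Some T2 -> iterNext (a + b) T = Some T2.
Proof.
move=> h1; elim: a T2 => [|a IH] T2; first by move=> [<-].
rewrite iterNextS; case h: (iterNext a T1) => [T3|]; last by move=> H; discriminate H.
by move=> hN; rewrite addSn iterNextS (IH _ h).
Qed.

Lemma all_set0 (U : {set 'I_0}) : U = set0.
Proof. by apply/setP => -[]. Qed.

Lemma part1 n : forall k T, iterNext k (First n) = Some T -> good T.
Proof.
elim: n => [|n IHn].
  case=> [|k] T; last first.
    by rewrite iterNextS; case: (iterNext k (First 0)) => [T0|] H; discriminate H.
  case=> <-; change (good [set set0 : {set 'I_0}]); split; last by case.
  by split; rewrite ?inE //; try (by apply/eqP; apply: all_set0); move=> U V _ _; rewrite inE; apply/eqP; apply: all_set0.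
have h0 : forall k T', iterNext k (First n) = Some T' -> set0 \in T'.
  by move=> k T' /IHn [[]].
suff inv : forall k T, iterNext k (First n.+1) = Some T ->
    exists k' T' S, [/\ iterNext k' (First n) = Some T', S \in T' & T = Grow S T'].
  move=> k T /inv [k' [T' [S [h1 h2 ->]]]]; apply: good_Grow => //; exact: IHn h1.
elim=> [|k IH] T.
  by move=> [<-]; exists 0, (First n), set0; split => //; apply: (h0 0).
rewrite iterNextS; case h: (iterNext k (First n.+1)) => [T0|]; last by move=> H; discriminate H.
move=> hN; change (Next T0 = Some T) in hN.
have [k' [T' [S [h1 h2 e]]]] := IH _ h; rewrite e Next_Grow // in hN.
case hS: (NextS S T') hN => [S''|] hN.
  by case: hN => <-; exists k', T', S''; split => //; apply: NextS_in hS.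
case hT': (Next T') hN => [T''|] hN; last by discriminate hN.
case: hN => <-; exists k'.+1, T'', set0; split => //.
  by rewrite iterNextS h1.
by apply: (h0 k'.+1); rewrite iterNextS h1.
Qed.

Lemma part2 n : forall T, good T -> exists k, iterNext k (First n) = Some T.
Proof.
elim: n => [|n IHn] T.
  move=> [[h0 _ _ _] _]; exists 0; congr Some; apply/setP => U.
  by rewrite (all_set0 U) h0 set11.
have L2 : forall k T', iterNext k (First n) = Some T' ->
    exists m, iterNext m (First n.+1) = Some (Grow set0 T').
  elim=> [|k IH] T'.
    by move=> [<-]; exists 0.
  rewrite iterNextS; case h: (iterNext k (First n)) => [T0|]; last by move=> H; discriminate H.
  move=> hN; change (Next T0 = Some T') in hN.
  have [m0 hm0] := IH _ h.
  have [[h0 _ _ _] _] := part1 h.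
  have [L [hL hNone]] := last_ex h0.
  have [j hj] := reach h0 hL.
  have [_ hit] := iterS_Grow h0 hj.
  exists (j.+1 + m0); apply: iterNext_add hm0 _.
  by rewrite iterNextS hit; change (Next (Grow L T0) = Some (Grow set0 T'));
     rewrite Next_Grow // hNone hN.
move=> hg.
have gC := good_Cut hg; have [k hk] := IHn _ gC.
have [m hm] := L2 _ _ hk.
have [[h0 _ _ _] _] := gC.
have [j hj] := reach h0 (swm_Cut hg).
have [_ hit] := iterS_Grow h0 hj.
rewrite Grow_Cut // in hit.
exists (j + m); exact: iterNext_add hm hit.
Qed.

Theorem theorem5p11 (n : nat) (T : {set {set 'I_n}}) :
  (exists k : nat, iterNext k (First n) = Some T) <-> is_NLT T.
Proof.
split.
  by move=> [k hk]; apply: good_NLT; exact: part1 hk.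
by move=> /NLT_good; apply: part2.
Qed.
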